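(* Let $S$ be a nonempty subset of $\mathbb{Z}$ and $\mathcal{T}\subseteq\mathbb{N}$. Then for all integers $0\le\ell\le k<|S|$, the generalized binomial coefficient $\binom{k}{\ell}_{S,\mathcal{T}}:=\dfrac{k!_{S,\mathcal{T}}}{\ell!_{S,\mathcal{T}}\,(k-\ell)!_{S,\mathcal{T}}}$ is a positive integer.
   Context: $\mathbb{N}=\{0,1,2,\dots\}$. For an integer $b\ge0$ and $a\in\mathbb{Z}$ define $\operatorname{ord}_b(a):=\sup\{k\in\mathbb{N}: a\mathbb{Z}\subseteq b^k\mathbb{Z}\}$ (convention $0^0=1$); thus for $b\ge2$ it is the largest $k$ with $b^k\mid a$ ($+\infty$ for $a=0$), $\operatorname{ord}_0(a)=+\infty$ if $a=0$ and $0$ otherwise, and $\operatorname{ord}_1(a)=+\infty$. For nonempty $S\subseteq\mathbb{Z}$, a $b$-ordering of $S$ is a sequence $(a_i)_{i\ge0}$ in $S$ such that for each $i\ge1$, $a_i$ attains $\min_{a'\in S}\sum_{j=0}^{i-1}\operatorname{ord}_b(a'-a_j)$; the $b$-exponent sequence is $\alpha_k(S,b):=\sum_{j=0}^{k-1}\operatorname{ord}_b(a_k-a_j)$ for any $b$-ordering (independent of the choice). For $\mathcal{T}\subseteq\mathbb{N}$ the generalized factorial is $k!_{S,\mathcal{T}}:=\prod_{b\in\mathcal{T}}b^{\alpha_k(S,b)}$, with conventions $b^{+\infty}=0$ for $b=0$ and $b\ge2$, $1^{+\infty}=1$, and $b^0=1$ for all $b\in\mathbb{N}$. *)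

(* Defs.v *)
From mathcomp Require Import all_boot all_order all_algebra.
From Stdlib Require Import ClassicalEpsilon.
Set Implicit Arguments. Unset Strict Implicit. Unset Printing Implicit Defensive.
Import Order.TTheory GRing.Theory Num.Theory.

(* Extended naturals N ∪ {+oo}: [Some n] = n, [None] = +oo. *)
Definition enat := option nat.

Definition eadd (x y : enat) : enat :=
  match x, y with Some m, Some n => Some (m + n)%N | _, _ => None end.

Definition ele (x y : enat) : Prop :=
  match x, y with
  | _, None => True
  | None, Some _ => False
  | Some m, Some n => (m <= n)%N
  end.

(* ord_b(a) = sup { k in N : a Z ⊆ b^k Z } = sup { k : b^k | a }  (0^0 = 1).
   If the set is unbounded the sup is +oo; otherwise it is its maximum,
   which (for a <> 0) lies below |a|+1. *)
Definition ordb (b : nat) (a : int) : enat :=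
  if excluded_middle_informative (forall k : nat, ((b ^ k)%:Z %| a)%Z)
  then None
  else Some (\max_(k < `|a|%N.+1 | ((b ^ k)%:Z %| a)%Z) k)%N.

Definition ordsum (b : nat) (a : nat -> int) (i : nat) (x : int) : enat :=
  foldr eadd (Some 0%N) [seq ordb b (x - a j)%R | j <- iota 0 i].

Definition is_bordering (S : int -> Prop) (b : nat) (a : nat -> int) : Prop :=
  (forall i, S (a i)) /\
  (forall i, (0 < i)%N -> forall x, S x -> ele (ordsum b a i (a i)) (ordsum b a i x)).

Definition some_bordering (S : int -> Prop) (b : nat) : nat -> int :=
  epsilon (inhabits (fun _ => 0%R)) (is_bordering S b).

Definition alpha (S : int -> Prop) (b k : nat) : enat :=
  let a := some_bordering S b in ordsum b a k (a k).

Definition epow (b : nat) (x : enat) : nat :=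
  match x with Some n => (b ^ n)%N | None => if b == 1%N then 1%N else 0%N end.

Definition gfact_term (S : int -> Prop) (T : nat -> Prop) (k b : nat) : nat :=
  if excluded_middle_informative (T b) then epow b (alpha S b k) else 1%N.

Definition fin_supp (S : int -> Prop) (T : nat -> Prop) (k : nat) : Prop :=
  exists N : nat, forall b : nat, (N <= b)%N -> gfact_term S T k b = 1%N.

(* k!_{S,T} = prod_{b in T} b^{alpha_k(S,b)}; the (possibly infinite) product
   is the finite product when only finitely many factors differ from 1, and
   is set to 0 (junk; never a positive integer) otherwise. *)
Definition gfact (S : int -> Prop) (T : nat -> Prop) (k : nat) : nat :=
  match excluded_middle_informative (fin_supp S T k) with
  | left _ =>
      let N := epsilon (inhabits 0%N)
                 (fun N => forall b, (N <= b)%N -> gfact_term S T k b = 1%N) in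
      (\prod_(b < N) gfact_term S T k b)%N
  | right _ => 0%N
  end.

(* k < |S| : S has at least k+1 distinct elements *)
Definition lt_card (k : nat) (S : int -> Prop) : Prop :=
  exists s : seq int, uniq s /\ size s = k.+1 /\ (forall x, x \in s -> S x).

(* Main.v *)
Require Import Defs.
From mathcomp Require Import all_boot all_order all_algebra.
From mathcomp Require Import zify ring.
From Stdlib Require Import ClassicalEpsilon Classical.
Set Implicit Arguments. Unset Strict Implicit. Unset Printing Implicit Defensive.
Import Order.TTheory GRing.Theory Num.Theory.

Lemma dvdzN (b k : nat) (a : int) : (((b ^ k)%N)%:Z %| a)%Z = (b ^ k %| `|a|)%N.
Proof. by rewrite dvdzE. Qed.

Lemma ordb0 b : ordb b 0 = None.
Proof.
rewrite /ordb; case: excluded_middle_informative => // H; exfalso; apply: H => k; exact: dvdz0.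
Qed.

Lemma ordb_spec b a n : (n <= `|a|)%N -> (b^n %| `|a|)%N -> ~~ (b^n.+1 %| `|a|)%N ->
  ordb b a = Some n.
Proof.
move=> hn h1 h2; rewrite /ordb; case: excluded_middle_informative => H.
  by move: (H n.+1); rewrite dvdzN (negbTE h2).
congr Some; apply/eqP; rewrite eqn_leq; apply/andP; split.
  apply/bigmax_leqP => i; rewrite dvdzN => hi.
  rewrite leqNgt; apply/negP => lt; move/negP: h2; apply.
  apply: dvdn_trans hi; exact: dvdn_exp2l.
have hn' : (n < `|a|.+1)%N by [].
by apply: (leq_bigmax_cond (Ordinal hn')) => /=; rewrite dvdzN.
Qed.

Lemma ordb_ndvd b a : ~~ (b%:Z %| a)%Z -> ordb b a = Some 0.
Proof.
move=> h; apply: ordb_spec => //; rewrite ?expn0 ?dvd1n // expn1; by move: h; rewrite dvdzE.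

Qed.

Lemma val_exists b (d : nat) : (1 < b)%N -> (0 < d)%N ->
  exists n, (b^n %| d)%N /\ ~~ (b^n.+1 %| d)%N.
Proof.
move=> hb; elim: d {-2}d (leqnn d) => [|m IH] d hd d0.
  by move: d0; rewrite leqn0 in hd; rewrite (eqP hd).
case hdv: (b %| d)%N; last by exists 0; rewrite expn0 dvd1n expn1 hdv.
move/dvdnP: hdv => [q hq].
have q0 : (0 < q)%N by move: d0; rewrite hq muln_gt0 => /andP[].
have qm : (q <= m)%N.
  have : (q < d)%N by rewrite hq -{1}(muln1 q) ltn_pmul2l //.
  move=> h; rewrite -ltnS; exact: leq_trans h hd.
have [n [h1 h2]] := IH q qm q0.
exists n.+1; rewrite hq !expnSr; split; first by rewrite dvdn_pmul2r ?(ltnW hb).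
by rewrite dvdn_pmul2r ?(ltnW hb) // -expnSr.
Qed.

Lemma ordb_fin b a : (1 < b)%N -> a != 0%R -> exists n, ordb b a = Some n.
Proof.
move=> hb ha; have a0 : (0 < `|a|)%N by rewrite absz_gt0.
have [n [h1 h2]] := val_exists hb a0.
exists n; apply: (ordb_spec _ h1 h2).
have := dvdn_leq a0 h1; have := ltn_expl n hb; lia.
Qed.

Definition eadd1 (n : nat) (x : enat) : enat := eadd (Some n) x.

Lemma ordb_mul b d : (1 < b)%N -> ordb b (Posz b * d)%R = eadd (Some 1) (ordb b d).
Proof.
move=> hb; have [->|d0] := eqVneq d 0; first by rewrite mulr0 !ordb0.
have a0 : (0 < `|d|)%N by rewrite absz_gt0.
have [n [h1 h2]] := val_exists hb a0.
have bd : `|(Posz b * d)%R|%N = (b * `|d|)%N by rewrite abszM.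
rewrite (ordb_spec (n:=n) _ h1 h2); last first.
  have := dvdn_leq a0 h1; have := ltn_expl n hb; lia.
rewrite (ordb_spec (n:=n.+1)) //; rewrite bd.
- have := dvdn_leq a0 h1; have := ltn_expl n hb; nia.
- by rewrite expnS dvdn_pmul2l ?(ltnW hb).
- by rewrite expnS dvdn_pmul2l ?(ltnW hb).
Qed.


Definition gsum (b : nat) (s : seq int) (x : int) : enat :=
  foldr eadd (Some 0%N) [seq ordb b (x - y)%R | y <- s].

Lemma eaddC x y : eadd x y = eadd y x.
Proof. by case: x => [m|]; case: y => [n|] //=; rewrite addnC. Qed.

Lemma eaddA x y z : eadd x (eadd y z) = eadd (eadd x y) z.
Proof. by case: x => [m|]; case: y => [n|]; case: z => [p|] //=; rewrite addnA. Qed.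

Lemma eadd0 x : eadd (Some 0) x = x.
Proof. by case: x. Qed.

Lemma gsum_cons b y s x : gsum b (y :: s) x = eadd (ordb b (x - y)%R) (gsum b s x).
Proof. by []. Qed.

Lemma gsum_nil b x : gsum b [::] x = Some 0.
Proof. by []. Qed.

Lemma gsum_cat b s1 s2 x : gsum b (s1 ++ s2) x = eadd (gsum b s1 x) (gsum b s2 x).
Proof.
elim: s1 => [|y s1 IH]; first by rewrite cat0s gsum_nil eadd0.
by rewrite cat_cons !gsum_cons IH eaddA.
Qed.

Definition clp (b : nat) (r : int) := fun y : int => (y %% b)%Z == r.

Lemma gsum_class b s x : gsum b s x = gsum b (filter (clp b (x %% b)%Z) s) x.
Proof.
elim: s => [|y s IH] //=; rewrite /clp; case: ifP => hy.
  by rewrite !gsum_cons IH.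
rewrite gsum_cons IH ordb_ndvd ?eadd0 //.
by rewrite -eqz_mod_dvd eq_sym hy.
Qed.

Lemma sub_class (b : nat) (x y : int) : (x %% b)%Z = (y %% b)%Z ->
  (x - y = Posz b * (divz x b - divz y b))%R.
Proof.
move=> h; rewrite {1}(divz_eq x b) {1}(divz_eq y b) h; ring.
Qed.

Lemma eadd_shift u n v : eadd (eadd (Some 1) u) (eadd (Some n) v) = eadd (Some n.+1) (eadd u v).
Proof. by case: u => [p|]; case: v => [q|] //=; congr Some; lia. Qed.

Lemma gsum_scale b s x : (1 < b)%N -> (forall y, y \in s -> (y %% b)%Z = (x %% b)%Z) ->
  gsum b s x = eadd (Some (size s)) (gsum b (map (fun y => (y %/ b)%Z) s) (x %/ b)%Z).
Proof.
move=> hb; elim: s => [|y s IH] hs; first by [].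
rewrite /= gsum_cons -/(gsum b s x) IH; last by move=> z hz; apply: hs; rewrite inE hz orbT.
rewrite (@sub_class b); last by rewrite hs // inE eqxx.
by rewrite ordb_mul // eadd_shift.
Qed.


Fixpoint valsa (b : nat) (pre s : seq int) : seq enat :=
  match s with [::] => [::] | x :: s' => gsum b pre x :: valsa b (rcons pre x) s' end.

Fixpoint greedya (b : nat) (S : int -> Prop) (pre s : seq int) : Prop :=
  match s with [::] => True
  | x :: s' => (S x /\ forall y, S y -> ele (gsum b pre x) (gsum b pre y))
               /\ greedya b S (rcons pre x) s' end.

Definition eleb (x y : enat) : bool :=
  match x, y with
  | _, None => true
  | None, Some _ => false
  | Some m, Some n => (m <= n)%N
  end.

Lemma eleP x y : ele x y <-> eleb x y.
Proof. by case: x => [m|]; case: y => [n|]. Qed.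

Lemma eleb_trans : transitive eleb.
Proof. move=> y x z; case: x => [m|]; case: y => [n|]; case: z => [p|] //=; lia. Qed.

Lemma eleb_refl : reflexive eleb.
Proof. by case=> [m|] /=. Qed.

Lemma size_valsa b pre s : size (valsa b pre s) = size s.
Proof. by elim: s pre => [|x s IH] pre //=; rewrite IH. Qed.

Lemma nth_valsa b pre s i : (i < size s)%N ->
  nth None (valsa b pre s) i = gsum b (pre ++ take i s) (nth 0%R s i).
Proof.
elim: s pre i => [|x s IH] pre [|i] //=; first by rewrite cats0.
by move=> hi; rewrite IH // cat_rcons.
Qed.

Lemma eadd_le u v : eleb u (eadd u v).
Proof. by case: u => [m|]; case: v => [n|] //=; rewrite leq_addr. Qed.

Lemma gsum_rcons b pre x y : gsum b (rcons pre x) y = eadd (gsum b pre y) (ordb b (y - x)%R).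
Proof. by rewrite -cats1 gsum_cat gsum_cons gsum_nil eaddC [eadd (ordb _ _) _]eaddC eadd0 eaddC. Qed.

Lemma greedy_sorted b S pre s : greedya b S pre s -> sorted eleb (valsa b pre s).
Proof.
elim: s pre => [|x s IH] pre //=.
case: s IH => [|y s] IH //= [[Sx hx] hrest].
have := IH _ hrest => /= ->; rewrite andbT.
move: hrest => /= [[Sy _] _].
rewrite gsum_rcons; apply: (@eleb_trans (gsum b pre y)); last exact: eadd_le.
by apply/eleP; apply: hx.
Qed.

Lemma count_split b (P : pred enat) pre s : (0 < b)%N ->
  count P (valsa b pre s) =
  (\sum_(r < b) count P (valsa b (filter (clp b (nat_of_ord r)) pre) (filter (clp b (nat_of_ord r)) s)))%N.
Proof.
move=> b0; elim: s pre => [|x s IH] pre /=.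
  by rewrite big1.
rewrite IH.
have xm0 : (0 <= (x %% b)%Z)%R by apply: modz_ge0; rewrite -lt0n.
have hr : (`|(x %% b)%Z|%N < b)%N.
  have := ltz_mod x (d:=Posz b); rewrite -lt0n => /(_ b0).
  by rewrite -{1}(gez0_abs xm0).
pose r0 : 'I_b := Ordinal hr.
have e0 : Posz (nat_of_ord r0) = (x %% b)%Z by rewrite /= gez0_abs.
rewrite (bigD1 r0) // [in RHS](bigD1 r0) //= /clp e0 eqxx /= filter_rcons /clp eqxx.
rewrite -(gsum_class b pre x).
set A := \sum_(i < b | i != r0) _.
set B := \sum_(i < b | i != r0) _.
suff -> : A = B by exact: addnA.
apply: eq_bigr => r hr0; rewrite ifF; last first.
  apply/negP => /eqP h; move/negP: hr0; apply; apply/eqP/val_inj => /=.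
  by apply/eqP; rewrite -eqz_nat (_ : Posz r = (x %% b)%Z) // e0.
by rewrite filter_rcons ifF //; apply/negP => /eqP h; move/negP: hr0; apply; apply/eqP/val_inj => /=;
  apply/eqP; rewrite -eqz_nat e0 -h.
Qed.

Lemma greedy_filter b S (r : int) pre s : greedya b S pre s ->
  greedya b (fun y => S y /\ (y %% b)%Z = r) (filter (clp b r) pre) (filter (clp b r) s).
Proof.
have E : forall pre z, (z %% b)%Z = r -> gsum b (filter (clp b r) pre) z = gsum b pre z.
  by move=> pre0 z hz; rewrite (gsum_class b pre0 z) hz.
elim: s pre => [|x s IH] pre //= [[Sx hx] hrest].
case: ifP => hxr.
  have xr : (x %% b)%Z = r by apply/eqP.
  split; first split => //.
    by move=> y [Sy yr]; rewrite !E //; apply: hx.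
  by have := IH _ hrest; rewrite filter_rcons hxr.
by have := IH _ hrest; rewrite filter_rcons hxr.
Qed.

Lemma ele_cancel n u v : ele (eadd (Some n) u) (eadd (Some n) v) -> ele u v.
Proof. by case: u => [p|]; case: v => [q|] //=; rewrite leq_add2l. Qed.

Lemma greedy_scale b S (r : int) pre s : (1 < b)%N -> (0 <= r)%R -> (r < Posz b)%R ->
  (forall y, y \in pre -> (y %% b)%Z = r) ->
  greedya b (fun y => S y /\ (y %% b)%Z = r) pre s ->
  greedya b (fun z => S (z * Posz b + r)%R) (map (fun y => (y %/ b)%Z) pre) (map (fun y => (y %/ b)%Z) s).
Proof.
move=> hb r0 rb; have b0 : Posz b != 0 by rewrite -lt0n ltnW.
elim: s pre => [|x s IH] pre hpre //= [[[Sx xr] hx] hrest].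
split; first split.
- by rewrite -xr -divz_eq.
- move=> z Sz.
  have yr : ((z * Posz b + r) %% b)%Z = r by rewrite modzMDl modz_small // r0 rb.
  have yd : ((z * Posz b + r) %/ b)%Z = z by rewrite divzMDl // divz_small ?addr0 // r0 /= rb.
  have := hx _ (conj Sz yr).
  rewrite (gsum_scale (x:=x)) //; last by move=> y hy; rewrite hpre.
  rewrite (gsum_scale (x:=(z * Posz b + r)%R)) //; last by move=> y hy; rewrite hpre.
  by rewrite yd; apply: ele_cancel.
- rewrite -map_rcons; apply: IH => //.
  by move=> y; rewrite mem_rcons inE => /orP[/eqP ->|/hpre].
Qed.

Lemma valsa_scale b (r : int) pre s i : (1 < b)%N ->
  (forall y, y \in pre ++ s -> (y %% b)%Z = r) -> (i < size s)%N ->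
  nth None (valsa b pre s) i =
  eadd (Some (size pre + i)) (nth None (valsa b (map (fun y => (y %/ b)%Z) pre) (map (fun y => (y %/ b)%Z) s)) i).
Proof.
move=> hb hc hi; rewrite !nth_valsa ?size_map //.
have hx : nth 0%R s i \in pre ++ s by rewrite mem_cat mem_nth ?orbT.
rewrite (gsum_scale (x:=nth 0%R s i)) //; last first.
  move=> y; rewrite mem_cat => /orP[hy|hy]; rewrite hc ?hc //.
    by rewrite mem_cat hy.
  by rewrite mem_cat (mem_take hy) orbT.
rewrite size_cat size_take hi map_cat map_take.
by rewrite (@set_nth_default _ [seq (y %/ b)%Z | y <- s] (0 %/ b)%Z 0%R) ?size_map // (nth_map 0%R).
Qed.


Definition ltb (e : enat) (t : nat) : bool :=
  match e with Some m => (m < t)%N | None => false end.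

Definition cnt (v : seq enat) (t : nat) : nat := count (fun e => ltb e t) v.

Lemma ltb_mono e e' t : eleb e e' -> ltb e' t -> ltb e t.
Proof. case: e => [m|]; case: e' => [n|] //=; lia. Qed.

Lemma cnt_le v i t : sorted eleb v -> (i < size v)%N -> ~~ ltb (nth None v i) t -> (cnt v t <= i)%N.
Proof.
elim: v i => [|e v IH] i //= hs.
have hall : all (eleb e) v by apply: order_path_min hs; exact: eleb_trans.
have hsv : sorted eleb v by apply: path_sorted hs.
case: i => [|i] /= hi hn.
  rewrite (negbTE hn) /= add0n leqn0 -(negbK (_ == 0)) -lt0n -has_count.
  apply/hasPn => e' he'; apply/negP => hl; move/negP: hn; apply.
  by apply: ltb_mono hl; move/allP: hall; apply.
have := IH i hsv hi hn; rewrite /cnt; case: (ltb e t) => /=; lia.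
Qed.

Lemma cnt_ge v i t : sorted eleb v -> (i < size v)%N -> (cnt v t <= i)%N -> ~~ ltb (nth None v i) t.
Proof.
move=> hs hi hc; apply/negP => hl; move: hc; apply/negP; rewrite -ltnNge.
elim: v i hs hi hl => [|e v IH] i //= hs.
have hall : all (eleb e) v by apply: order_path_min hs; exact: eleb_trans.
have hsv : sorted eleb v by apply: path_sorted hs.
case: i => [|i] /= hi hl.
  by rewrite hl.
have hle : ltb e t by apply: ltb_mono hl; move/allP: hall; apply; exact: mem_nth.
by rewrite hle /= add1n ltnS; apply: IH.
Qed.

Lemma ltb_shift1 p u t : ~~ ltb (eadd (Some p) u) t -> ~~ ltb u (t - p).
Proof. case: u => [m|] //=; lia. Qed.

Lemma ltb_shift2 p u t t' : ~~ ltb u t -> (t' <= t + p)%N -> ~~ ltb (eadd (Some p) u) t'.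
Proof. case: u => [m|] //=; lia. Qed.

Lemma cnt0 v : cnt v 0 = 0.
Proof. by elim: v => [|e v IH] //=; rewrite IH; case: e. Qed.

Lemma cnt_size v t : (cnt v t <= size v)%N.
Proof. exact: count_size. Qed.

Lemma superadd b (hb : (1 < b)%N) V : forall S s a c, greedya b S [::] s -> (a + c <= V)%N ->
  (cnt (valsa b [::] s) (a + c) <= cnt (valsa b [::] s) a + cnt (valsa b [::] s) c)%N.
Proof.
have b0 : (0 < b)%N by apply: ltnW.
elim: V => [|V IH] S s a c hg hac.
  have -> : a = 0 by lia. by rewrite cnt0 !add0n.
case: (posnP a) => [->|a0]; first by rewrite cnt0 add0n.
case: (posnP c) => [->|c0]; first by rewrite cnt0 !addn0.
rewrite /cnt !(count_split _ _ _ b0) -(@big_split nat 0 addn) /=.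
apply: leq_sum => r _.
set sr := filter (clp b (nat_of_ord r)) s.
set w := valsa b [::] sr.
set s' := map (fun y => (y %/ b)%Z) sr.
set u := valsa b [::] s'.
rewrite -!/(cnt w _).
have r0 : (0 <= Posz r)%R by [].
have rb : (Posz r < Posz b)%R by rewrite ltz_nat.
have gr : greedya b (fun y => S y /\ (y %% b)%Z = r) [::] sr by exact: (@greedy_filter b S r [::] s hg).
have gs : greedya b (fun z => S (z * Posz b + r)%R) [::] s'.
  by apply: (greedy_scale (pre := [::])) gr.
have sw : sorted eleb w by apply: greedy_sorted gr.
have su : sorted eleb u by apply: greedy_sorted gs.
have szw : size w = size sr by rewrite size_valsa.
have szu : size u = size sr by rewrite size_valsa size_map.
have wu : forall i, (i < size sr)%N -> nth None w i = eadd (Some i) (nth None u i).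
  move=> i hi; rewrite /w (valsa_scale (r := r)) //.
  by move=> y; rewrite cat0s mem_filter => /andP[/eqP].
set P := cnt w a; set Q := cnt w c.
case: (leqP (size sr) (P + Q)) => hn.
  by apply: leq_trans hn; rewrite -szw; apply: cnt_size.
have w0 : nth None w 0 = Some 0.
  by rewrite /w nth_valsa ?take0 //; apply: leq_ltn_trans hn.
have P0 : (0 < P)%N.
  rewrite lt0n; apply/negP => /eqP hP.
  have := @cnt_ge w 0 a sw; rewrite szw w0 /= => /(_ (leq_ltn_trans (leq0n _) hn)).
  rewrite -/P hP => /(_ (leqnn 0)); rewrite -ltnNge; lia.
have Q0 : (0 < Q)%N.
  rewrite lt0n; apply/negP => /eqP hQ.
  have := @cnt_ge w 0 c sw; rewrite szw w0 /= => /(_ (leq_ltn_trans (leq0n _) hn)).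
  rewrite -/Q hQ => /(_ (leqnn 0)); rewrite -ltnNge; lia.
have hP : (cnt u (a - P) <= P)%N.
  apply: cnt_le => //; first by rewrite szu; lia.
  apply: ltb_shift1; rewrite -wu; last by lia.
  by apply: cnt_ge => //; rewrite szw; lia.
have hQ : (cnt u (c - Q) <= Q)%N.
  apply: cnt_le => //; first by rewrite szu; lia.
  apply: ltb_shift1; rewrite -wu; last by lia.
  by apply: cnt_ge => //; rewrite szw; lia.
have hPQ : (cnt u ((a - P) + (c - Q)) <= P + Q)%N.
  apply: leq_trans (IH _ _ _ _ gs _) _; first by lia.
  exact: leq_add.
apply: cnt_le => //; first by rewrite szw.
rewrite wu //; apply: (ltb_shift2 (t := (a - P) + (c - Q))); last by lia.
by apply: cnt_ge => //; rewrite szu.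
Qed.


Lemma ex_min (S : int -> Prop) (f : int -> enat) : (exists x, S x) ->
  exists x, S x /\ forall y, S y -> ele (f x) (f y).
Proof.
move=> [x0 Sx0].
case: (classic (exists y n, S y /\ f y = Some n)) => [[y [n [Sy fy]]]|hno].
  elim/ltn_ind: n y Sy fy => n IH y Sy fy.
  case: (classic (exists y' m, S y' /\ f y' = Some m /\ (m < n)%N)) => [[y' [m [Sy' [fy' mn]]]]|hn].
    exact: (IH m mn y' Sy' fy').
  exists y; split => // y' Sy'; rewrite fy.
  case E: (f y') => [m|] //=; rewrite leqNgt; apply/negP => mn; apply: hn.
  by exists y', m.
exists x0; split => // y Sy.
case E: (f x0) => [n|]; first by exfalso; apply: hno; exists x0, n.
case E': (f y) => [m|] //; exfalso; apply: hno; exists y, m; done.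
Qed.

Definition pickm b (S : int -> Prop) (pre : seq int) : int :=
  epsilon (inhabits 0%R) (fun x => S x /\ forall y, S y -> ele (gsum b pre x) (gsum b pre y)).

Lemma pickm_spec b S pre : (exists x, S x) ->
  S (pickm b S pre) /\ forall y, S y -> ele (gsum b pre (pickm b S pre)) (gsum b pre y).
Proof.
move=> hS; exact: (epsilon_spec (inhabits 0%R) (fun x => S x /\ forall y, S y -> ele (gsum b pre x) (gsum b pre y)) (ex_min (gsum b pre) hS)).
Qed.

Fixpoint pref b S n : seq int :=
  match n with 0 => [::] | n'.+1 => rcons (pref b S n') (pickm b S (pref b S n')) end.

Definition ordseq b S (n : nat) : int := pickm b S (pref b S n).

Lemma mkseq_pref b S n : mkseq (ordseq b S) n = pref b S n.
Proof. by elim: n => [|n IH] //; rewrite mkseqS IH. Qed.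

Lemma ordsumE b a i x : ordsum b a i x = gsum b (mkseq a i) x.
Proof. by rewrite /ordsum /gsum /mkseq -map_comp. Qed.

Lemma exists_bordering S b : (exists x, S x) -> exists a, is_bordering S b a.
Proof.
move=> hS; exists (ordseq b S); split.
  by move=> i; case: (pickm_spec b (pref b S i) hS).
move=> i _ x Sx; rewrite !ordsumE mkseq_pref.
by case: (pickm_spec b (pref b S i) hS) => _; apply.
Qed.

Lemma some_bordering_spec S b : (exists x, S x) -> is_bordering S b (some_bordering S b).
Proof. move=> hS; exact: (epsilon_spec (inhabits (fun _ => 0%R)) (is_bordering S b) (exists_bordering b hS)). Qed.

Lemma greedy_of b S pre s :
  (forall i, (i < size s)%N -> S (nth 0%R s i) /\
     forall y, S y -> ele (gsum b (pre ++ take i s) (nth 0%R s i)) (gsum b (pre ++ take i s) y)) ->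
  greedya b S pre s.
Proof.
elim: s pre => [|x s IH] pre //= h; split.
  by have := h 0 erefl; rewrite /= cats0.
apply: IH => i hi; have := h i.+1 hi; by rewrite /= cat_rcons.
Qed.

Lemma take_mkseq (f : nat -> int) i n : (i <= n)%N -> take i (mkseq f n) = mkseq f i.
Proof. by move=> h; rewrite /mkseq -map_take take_iota (minn_idPl h). Qed.

Lemma bordering_greedy S b a n : is_bordering S b a -> greedya b S [::] (mkseq a n).
Proof.
move=> [hS hmin]; apply: (@greedy_of b S [::] (mkseq a n)) => i.
rewrite size_mkseq => hi.
rewrite (nth_mkseq 0%R a hi) cat0s (take_mkseq a (ltnW hi)).
split; first exact: hS.
move=> y Sy; case: i hi => [|i] hi.
  rewrite (_ : mkseq a 0 = [::]) // !gsum_nil; exact: (leqnn 0).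
by have := hmin i.+1 erefl y Sy; rewrite !ordsumE.
Qed.

Lemma alpha_nth S b j n : (j < n)%N ->
  alpha S b j = nth None (valsa b [::] (mkseq (some_bordering S b) n)) j.
Proof.
move=> hj; rewrite nth_valsa; last by rewrite size_mkseq.
rewrite cat0s (take_mkseq _ (ltnW hj)) (nth_mkseq 0%R _ hj).
by rewrite /alpha ordsumE.
Qed.

Lemma alpha_le S b j x : (exists y, S y) -> S x ->
  ele (alpha S b j) (gsum b (mkseq (some_bordering S b) j) x).
Proof.
move=> hS Sx; have [_ hmin] := some_bordering_spec b hS.
rewrite /alpha ordsumE; case: j => [|j].
  rewrite (_ : mkseq _ 0 = [::]) // !gsum_nil; exact: (leqnn 0).
by have := hmin j.+1 erefl x Sx; rewrite !ordsumE.
Qed.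


Lemma gsum_fin b A x : (forall y, y \in A -> exists n, ordb b (x - y)%R = Some n) ->
  exists n, gsum b A x = Some n.
Proof.
elim: A => [|y A IH] h; first by exists 0.
have [n hn] := h y (mem_head _ _).
have [m hm] : exists m, gsum b A x = Some m by apply: IH => z hz; apply: h; rewrite inE hz orbT.
by exists (n + m); rewrite gsum_cons hn hm.
Qed.

Lemma gsum_zero b A x : (forall y, y \in A -> ordb b (x - y)%R = Some 0) -> gsum b A x = Some 0.
Proof.
elim: A => [|y A IH] h //.
rewrite gsum_cons h ?mem_head // IH //.
by move=> z hz; apply: h; rewrite inE hz orbT.
Qed.

Lemma ele_fin e n : ele e (Some n) -> exists m, e = Some m.
Proof. by case: e => [m|] //= _; exists m. Qed.

Lemma ele_zero e : ele e (Some 0) -> e = Some 0.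
Proof. by case: e => [m|] //=; rewrite leqn0 => /eqP ->. Qed.

Lemma fresh (s0 A : seq int) : uniq s0 -> (size A < size s0)%N -> exists x, x \in s0 /\ x \notin A.
Proof.
move=> us hs; case: (boolP (all (fun x => x \in A) s0)) => h.
  by move: (uniq_leq_size us (fun x hx => (allP h) x hx)); rewrite leqNgt hs.
by move/allPn: h => [x hx hA]; exists x.
Qed.

Lemma count1 (b : nat) (y : int) s0 : uniq s0 ->
  (forall x x', x \in s0 -> x' \in s0 -> x != x' -> (x %% b)%Z != (x' %% b)%Z) ->
  (count (fun x => (x %% b)%Z == (y %% b)%Z) s0 <= 1)%N.
Proof.
elim: s0 => [|x s IH] //= /andP[xs us] hp.
have hp' : forall z z', z \in s -> z' \in s -> z != z' -> (z %% b)%Z != (z' %% b)%Z.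
  by move=> z z' hz hz'; apply: hp; rewrite inE ?hz ?hz' orbT.
case: eqP => hx /=; last by rewrite add0n; apply: IH.
suff -> : count (fun x0 : int => (x0 %% b)%Z == (y %% b)%Z) s = 0 by [].
apply/eqP; rewrite -leqn0 leqNgt -has_count; apply/hasPn => z hz; apply/negP => /eqP hz'.
have hne : x != z by apply/negP => /eqP e; move: xs; rewrite e hz.
have hz2 : z \in x :: s by rewrite inE hz orbT.
by move/negP: (hp x z (mem_head _ _) hz2 hne); apply; rewrite hx hz'.
Qed.

Lemma pigeon (b : nat) s0 A : uniq s0 ->
  (forall x x', x \in s0 -> x' \in s0 -> x != x' -> (x %% b)%Z != (x' %% b)%Z) ->
  (size A < size s0)%N -> exists x, x \in s0 /\ forall y, y \in A -> (x %% b)%Z != (y %% b)%Z.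
Proof.
move=> us hp hs.
have hc : (count (fun x => has (fun y => (x %% b)%Z == (y %% b)%Z) A) s0 <= size A)%N.
  elim: A {hs} => [|y A IH]; first by rewrite count_pred0.
  apply: (@leq_trans (count (fun x => (x %% b)%Z == (y %% b)%Z) s0 +
                      count (fun x => has (fun y => (x %% b)%Z == (y %% b)%Z) A) s0)).
    rewrite -(count_predUI (fun x => (x %% b)%Z == (y %% b)%Z)).
    apply: leq_trans (leq_addr _ _); apply: sub_count => x /=; by [].
  by rewrite /= -add1n leq_add // count1.
have : has (predC (fun x => has (fun y => (x %% b)%Z == (y %% b)%Z) A)) s0.
  rewrite has_count; have := count_predC (fun x => has (fun y => (x %% b)%Z == (y %% b)%Z) A) s0.
  move=> hcp; rewrite lt0n; apply/negP => /eqP v0; move: hs; rewrite -hcp v0 addn0 ltnNge hc //.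
move=> hh; have [x hx hn] := hasP hh; exists x; split => // y hy.
by apply/negP => e; move/negP: hn; apply; apply/seq.hasP; exists y.
Qed.


Lemma prod_ext (F : nat -> nat) N M : (forall b, (N <= b)%N -> F b = 1%N) -> (N <= M)%N ->
  (\prod_(b < M) F b)%N = (\prod_(b < N) F b)%N.
Proof.
move=> hF hNM; rewrite -!(big_mkord xpredT) (big_cat_nat (leq0n N) hNM) /=.
have -> : (\prod_(N <= i < M) F i)%N = 1%N.
  by rewrite big_nat_cond big1 // => i /andP[/andP[hi _] _]; exact: hF.
by rewrite muln1.
Qed.

Lemma gfactE S T j N : (forall b, (N <= b)%N -> gfact_term S T j b = 1%N) ->
  gfact S T j = (\prod_(b < N) gfact_term S T j b)%N.
Proof.
move=> hN; rewrite /gfact; case: excluded_middle_informative => [h|h]; last first.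
  by exfalso; apply: h; exists N.
have hN0 := epsilon_spec (inhabits 0%N) (fun N => forall b, (N <= b)%N -> gfact_term S T j b = 1%N) h.
set N0 := epsilon _ _ in hN0 *.
by rewrite -(prod_ext hN0 (leq_maxr N N0)) (prod_ext hN (leq_maxl N N0)).
Qed.

Lemma alpha_fin S k s0 b j : uniq s0 -> size s0 = k.+1 -> (forall x, x \in s0 -> S x) -> (j <= k)%N ->
  (b = 0%N -> alpha S b j = Some 0) /\ ((1 < b)%N -> exists n, alpha S b j = Some n).
Proof.
move=> us sz hs0 hj.
have hS : exists x, S x by exists (nth 0%R s0 0); apply: hs0; rewrite mem_nth // sz.
set A := mkseq (some_bordering S b) j.
have [x [xs xA]] : exists x, x \in s0 /\ x \notin A by apply: fresh => //; rewrite size_mkseq sz.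
have hle := alpha_le b j hS (hs0 x xs); rewrite -/A in hle.
have hne : forall y, y \in A -> (x - y)%R != 0.
  by move=> y hy; rewrite subr_eq0; apply/negP => /eqP e; move: xA; rewrite e hy.
split.
  move=> b0; subst b; apply: ele_zero; move: hle; rewrite (gsum_zero (A:=A) (x:=x)) // => y hy.
  apply: ordb_ndvd; rewrite dvdzE /= dvd0n absz_eq0; exact: hne.
move=> hb; have [n hn] : exists n, gsum b A x = Some n.
  apply: gsum_fin => y hy. exact: (ordb_fin hb (hne y hy)).
by rewrite hn in hle; apply: ele_fin hle.
Qed.

Lemma alpha_big S k s0 b j : uniq s0 -> size s0 = k.+1 -> (forall x, x \in s0 -> S x) -> (j <= k)%N ->
  ((2 * \sum_(x <- s0) `|x|%N).+2 <= b)%N -> alpha S b j = Some 0.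
Proof.
move=> us sz hs0 hj hb.
have hS : exists x, S x by exists (nth 0%R s0 0); apply: hs0; rewrite mem_nth // sz.
set M := (\sum_(x <- s0) `|x|%N)%N in hb.
have hM : forall x, x \in s0 -> (`|x| <= M)%N.
  by move=> x hx; rewrite /M (bigD1_seq x) //= leq_addr.
have hp : forall x x', x \in s0 -> x' \in s0 -> x != x' -> (x %% b)%Z != (x' %% b)%Z.
  move=> x x' hx hx' hne; rewrite eqz_mod_dvd dvdzE /=; apply/negP => hd.
  have h0 : (0 < `|x - x'|)%N by rewrite absz_gt0 subr_eq0.
  have := dvdn_leq h0 hd.
  have := leqD_dist x 0 x'; rewrite subr0 sub0r abszN.
  have := hM x hx; have := hM x' hx'; lia.
set A := mkseq (some_bordering S b) j.
have hsz : (size A < size s0)%N by rewrite size_mkseq sz.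
have [x [xs hx]] := pigeon us hp hsz.
have hle := alpha_le b j hS (hs0 x xs); rewrite -/A in hle.
apply: ele_zero; move: hle; rewrite (gsum_zero (A:=A) (x:=x)) // => y hy.
by apply: ordb_ndvd; rewrite -eqz_mod_dvd; apply: hx.
Qed.


Lemma super_alpha S k l s0 b nl nkl nk : uniq s0 -> size s0 = k.+1 -> (forall x, x \in s0 -> S x) ->
  (l <= k)%N -> (1 < b)%N ->
  alpha S b l = Some nl -> alpha S b (k - l) = Some nkl -> alpha S b k = Some nk ->
  (nl + nkl <= nk)%N.
Proof.
move=> us sz hs0 hlk hb hl hkl hk.
have hS : exists x, S x by exists (nth 0%R s0 0); apply: hs0; rewrite mem_nth // sz.
set a := some_bordering S b.
have hg : greedya b S [::] (mkseq a k.+1) by apply: bordering_greedy; exact: some_bordering_spec.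
set v := valsa b [::] (mkseq a k.+1).
have sv : sorted eleb v by apply: greedy_sorted hg.
have szv : size v = k.+1 by rewrite size_valsa size_mkseq.
have c1 : (cnt v nl <= l)%N.
  apply: cnt_le => //; first by rewrite szv ltnS.
  by rewrite -alpha_nth ?ltnS // hl /= ltnn.
have c2 : (cnt v nkl <= k - l)%N.
  apply: cnt_le => //; first by rewrite szv ltnS leq_subr.
  by rewrite -alpha_nth ?ltnS ?leq_subr // hkl /= ltnn.
have c3 := @superadd b hb (nl + nkl) S _ nl nkl hg (leqnn _).
have c4 : (cnt v (nl + nkl) <= k)%N.
  apply: leq_trans c3 _; rewrite -/v; have := leq_add c1 c2; rewrite subnKC //.
have := cnt_ge sv (i := k) (t := nl + nkl); rewrite szv ltnSn => /(_ erefl c4).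
by rewrite -alpha_nth // hk /= -leqNgt.
Qed.

Lemma termT S T j b : T b -> gfact_term S T j b = epow b (alpha S b j).
Proof. by move=> hT; rewrite /gfact_term; case: excluded_middle_informative. Qed.

Lemma termN S T j b : ~ T b -> gfact_term S T j b = 1%N.
Proof. by move=> hT; rewrite /gfact_term; case: excluded_middle_informative. Qed.

Lemma term_facts S T k l s0 b : uniq s0 -> size s0 = k.+1 -> (forall x, x \in s0 -> S x) ->
  (l <= k)%N ->
  (forall j, (j <= k)%N -> (0 < gfact_term S T j b)%N) /\
  (gfact_term S T l b * gfact_term S T (k - l) b %| gfact_term S T k b)%N.
Proof.
move=> us sz hs0 hlk; case: (classic (T b)) => hT; last first.
  by rewrite !termN //; split => // j _; rewrite termN.
rewrite !termT //.
have tT : forall j, gfact_term S T j b = epow b (alpha S b j) by move=> j; rewrite termT.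
case: b hT tT => [|[|b]] hT tT.
- have h0 : forall j, (j <= k)%N -> alpha S 0 j = Some 0.
    by move=> j hj; have [h _] := alpha_fin 0 us sz hs0 hj; apply: h.
  split; first by move=> j hj; rewrite tT h0.
  by rewrite !h0 ?leq_subr.
- have h1 : forall x, epow 1 x = 1%N by case=> [n|] //=; rewrite exp1n.
  by split; [move=> j _; rewrite tT h1 | rewrite !h1].
- have hb : (1 < b.+2)%N by [].
  have [nl hl] := (alpha_fin b.+2 us sz hs0 hlk).2 hb.
  have [nkl hkl] := (alpha_fin b.+2 us sz hs0 (leq_subr l k)).2 hb.
  have [nk hk] := (alpha_fin b.+2 us sz hs0 (leqnn k)).2 hb.
  split.
    move=> j hj; have [n hn] := (alpha_fin b.+2 us sz hs0 hj).2 hb.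
    by rewrite tT hn /= expn_gt0.
  rewrite hl hkl hk /= -expnD dvdn_exp2l //.
  exact: (super_alpha us sz hs0 hlk hb hl hkl hk).
Qed.


Theorem theorem3p14 (S : int -> Prop) (T : nat -> Prop) (k l : nat) :
  (exists x, S x) -> (l <= k)%N -> lt_card k S ->
  (0 < gfact S T l * gfact S T (k - l))%N /\
  exists m : nat, (0 < m)%N /\ gfact S T k = (m * (gfact S T l * gfact S T (k - l)))%N.
Proof.
move=> _ hlk [s0 [us [sz hs0]]].
set N := ((2 * \sum_(x <- s0) `|x|%N).+2)%N.
have hN : forall j, (j <= k)%N -> forall b, (N <= b)%N -> gfact_term S T j b = 1%N.
  move=> j hj b hb; case: (classic (T b)) => hT; last by rewrite termN.
  by rewrite termT // (alpha_big us sz hs0 hj hb).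
have hF := fun b => term_facts T b us sz hs0 hlk.
rewrite (gfactE (hN l hlk)) (gfactE (hN (k - l) (leq_subr l k))) (gfactE (hN k (leqnn k))).
split.
  by rewrite muln_gt0 !prodn_gt0 // => b; have [h _] := hF b; apply: h; rewrite ?leq_subr.
exists (\prod_(b < N) (gfact_term S T k b %/ (gfact_term S T l b * gfact_term S T (k - l) b)))%N.
split.
  apply: prodn_gt0 => b; have [h1 h2] := hF b.
  rewrite divn_gt0; last by rewrite muln_gt0 h1 ?h1 ?leq_subr.
  by apply: dvdn_leq => //; apply: h1.
rewrite -(@big_split nat 1%N muln) -(@big_split nat 1%N muln) /=.
by apply: eq_bigr => b _; have [_ h2] := hF b; rewrite divnK.
Qed.
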